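(* Let $\psi\in(-\pi,\pi]$, $\tau>0$, and $k\in\mathbb{Z}\setminus\{0\}$. Then for every $(a,w)\in\mathbb{R}\times(\mathbb{C}\setminus\{0\})$ with $|a|<|w|$ and every $s>0$, $(sa,sw)\in\Gamma_k(\psi;\tau)$ if and only if $s = \frac{1}{\tau}\tau^{+}_{k}(a,w)$ (when $k>0$), respectively $s=\frac1\tau\tau^{-}_{-k}(a,w)$ (when $k<0$), and $\operatorname{Arg}(w)=\psi$.
   Context: $\operatorname{Arg}(w)\in(-\pi,\pi]$ is the principal argument; $\arccos:[-1,1]\to[0,\pi]$. For $|a|<|w|$ and integers $n\ge1$: $\tau_n^\pm(a,w) := \frac{1}{\sqrt{|w|^2-a^2}}[\pm\operatorname{Arg}(w)-\arccos(a/|w|)+2n\pi]$. $a(\Omega,\psi;\tau) := -\Omega\cot(\tau\Omega-\psi)$, $\rho(\Omega,\psi;\tau) := -\Omega/\sin(\tau\Omega-\psi)$. For $k\ge1$, $I_k(\psi) := (-\pi,0)+\psi+2k\pi$; for $k\le-1$, $I_k(\psi) := (0,\pi)+\psi+2k\pi$. $\Gamma_k(\psi;\tau) := \{(a(\Omega,\psi;\tau),\,\rho(\Omega,\psi;\tau)e^{i\psi}) : \tau\Omega\in I_k(\psi)\}\subset\mathbb{R}\times\mathbb{C}$. *)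

(* Defs.v *)
From Stdlib Require Import Reals ZArith.
From Coquelicot Require Import Coquelicot.
Open Scope R_scope.

(* Principal argument Arg(w) in (-PI, PI] for w <> 0 (value at 0 irrelevant).
   Stdlib's acos : [-1,1] -> [0,PI]. *)
Definition Arg (w : C) : R :=
  if Rle_dec 0 (Im w) then acos (Re w / Cmod w) else - acos (Re w / Cmod w).

(* tau_n^{+/-}(a,w), n >= 1 (sgn = +1 for tau^+, -1 for tau^-). *)
Definition tau_pm (sgn : R) (n : Z) (a : R) (w : C) : R :=
  / sqrt (Cmod w ^ 2 - a ^ 2) * (sgn * Arg w - acos (a / Cmod w) + 2 * IZR n * PI).
Definition tau_plus (n : Z) (a : R) (w : C) : R := tau_pm 1 n a w.
Definition tau_minus (n : Z) (a : R) (w : C) : R := tau_pm (-1) n a w.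

Definition a_fun (Om psi tau : R) : R := - Om * (cos (tau * Om - psi) / sin (tau * Om - psi)).
Definition rho_fun (Om psi tau : R) : R := - Om / sin (tau * Om - psi).

Definition in_I (k : Z) (psi x : R) : Prop :=
  if Z.ltb 0 k then psi + 2 * IZR k * PI - PI < x < psi + 2 * IZR k * PI
  else if Z.ltb k 0 then psi + 2 * IZR k * PI < x < psi + 2 * IZR k * PI + PI
  else False.

Definition expi (psi : R) : C := (cos psi, sin psi).

Definition in_Gamma (k : Z) (psi tau : R) (p : R * C) : Prop :=
  exists Om : R, in_I k psi (tau * Om) /\
    p = (a_fun Om psi tau, Cmult (RtoC (rho_fun Om psi tau)) (expi psi)).

(* Main.v *)
Require Import Defs.
From Stdlib Require Import Reals ZArith Lra Lia.
From Coquelicot Require Import Coquelicot.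
Open Scope R_scope.

Lemma per_aux (f : R -> R) (Hf : forall x n, f (x + 2 * INR n * PI) = f x) :
  forall x k, f (x + 2 * IZR k * PI) = f x.
Proof.
  intros x k. destruct (Z_le_gt_dec 0 k) as [Hk|Hk].
  - rewrite <- (Z2Nat.id k Hk), <- INR_IZR_INZ. apply Hf.
  - assert (E : IZR k = - INR (Z.to_nat (- k))).
    { rewrite INR_IZR_INZ, Z2Nat.id by lia. rewrite opp_IZR. ring. }
    rewrite <- (Hf (x + 2 * IZR k * PI) (Z.to_nat (-k))). f_equal. rewrite E. ring.
Qed.

Lemma sin_perZ x k : sin (x + 2 * IZR k * PI) = sin x.
Proof. apply per_aux, sin_period. Qed.
Lemma cos_perZ x k : cos (x + 2 * IZR k * PI) = cos x.
Proof. apply per_aux, cos_period. Qed.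

Lemma Cmod_polar r p : 0 <= r -> Cmod (r * cos p, r * sin p) = r.
Proof.
  intros Hr. unfold Cmod; cbn [fst snd].
  replace ((r * cos p) ^ 2 + (r * sin p) ^ 2) with (r * r).
  - apply sqrt_square; auto.
  - pose proof (sin2_cos2 p) as H. unfold Rsqr in H. nra.
Qed.

Lemma Arg_polar r p : 0 < r -> - PI < p <= PI -> Arg (r * cos p, r * sin p) = p.
Proof.
  intros Hr Hp. unfold Arg. rewrite Cmod_polar by lra. simpl.
  replace (r * cos p / r) with (cos p) by (field; lra).
  destruct (Rle_dec 0 (r * sin p)) as [H|H].
  - destruct (Rlt_le_dec p 0) as [Hn|Hn].
    + pose proof (sin_lt_0_var p ltac:(lra) Hn). nra.
    + apply acos_cos; lra.
  - destruct (Rlt_le_dec p 0) as [Hn|Hn].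
    + rewrite <- cos_neg, acos_cos by lra. ring.
    + pose proof (sin_ge_0 p Hn ltac:(lra)). nra.
Qed.

Lemma polar_of_Arg (w : C) : w <> RtoC 0 ->
  w = (Cmod w * cos (Arg w), Cmod w * sin (Arg w)).
Proof.
  intros Hw. destruct w as [u v].
  assert (Hr : 0 < Cmod (u, v)) by (apply Cmod_gt_0; exact Hw).
  assert (Hr2 : Cmod (u,v) ^ 2 = u ^ 2 + v ^ 2).
  { unfold Cmod; cbn [fst snd]. rewrite pow2_sqrt; [ring|nra]. }
  set (r := Cmod (u, v)) in *.
  assert (Hx : -1 <= u / r <= 1).
  { split.
    - apply (Rmult_le_reg_r r); [lra|]. field_simplify; [|lra]. nra.
    - apply (Rmult_le_reg_r r); [lra|]. field_simplify; [|lra]. nra. }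
  assert (Hs : 1 - (u / r)² = (Rabs v / r) * (Rabs v / r)).
  { unfold Rsqr.
    assert (Hv : Rabs v * Rabs v = v * v) by (rewrite <- Rabs_mult; apply Rabs_pos_eq; nra).
    replace (Rabs v / r * (Rabs v / r)) with (v * v / (r * r)) by (rewrite <- Hv; field; lra).
    apply (Rmult_eq_reg_r (r*r)); [|nra]. field_simplify; try lra. }
  assert (Hsa : sin (acos (u / r)) = Rabs v / r).
  { rewrite sin_acos by exact Hx. rewrite Hs. apply sqrt_square.
    apply Rdiv_le_0_compat; [apply Rabs_pos|lra]. }
  unfold Arg; simpl. fold r.
  destruct (Rle_dec 0 v) as [H|H].
  - rewrite cos_acos by exact Hx. rewrite Hsa, Rabs_pos_eq by lra.
    f_equal; field; lra.
  - rewrite cos_neg, sin_neg, cos_acos by exact Hx. rewrite Hsa, Rabs_left by lra.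
    f_equal; field; lra.
Qed.

Theorem mainTheorem20 (psi tau : R) (k : Z) :
  - PI < psi <= PI -> 0 < tau -> k <> 0%Z ->
  forall (a : R) (w : C), w <> RtoC 0 -> Rabs a < Cmod w ->
  forall s : R, 0 < s ->
  (in_Gamma k psi tau (s * a, Cmult (RtoC s) w) <->
   ((if Z.ltb 0 k then s = / tau * tau_plus k a w
     else s = / tau * tau_minus (- k) a w) /\ Arg w = psi)).
Proof.
  intros Hpsi Htau Hk0 a w Hw Hab s Hs.
  pose proof PI_RGT_0 as HPI.
  assert (Hkc : (0 < k)%Z \/ (k < 0)%Z) by lia.
  split.
  - intros [Om [HI Heq]].
    unfold a_fun, rho_fun, expi, RtoC, Cmult in Heq. destruct w as [u v].
    cbn [fst snd] in Heq. injection Heq as E1 E2 E3.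
    set (th := tau * Om - psi) in *.
    unfold in_I in HI.
    destruct Hkc as [Hk|Hk].
    + rewrite (proj2 (Z.ltb_lt 0 k) Hk) in HI |- *.
      assert (HkR : 1 <= IZR k) by (apply IZR_le; lia).
      assert (Hsn : sin th < 0).
      { pose proof (sin_perZ (th - 2 * IZR k * PI) k) as P.
        replace (th - 2 * IZR k * PI + 2 * IZR k * PI) with th in P by ring.
        rewrite P. apply sin_lt_0_var; unfold th; lra. }
      assert (HOm : 0 < Om).
      { apply (Rmult_lt_reg_l tau); [lra|]. rewrite Rmult_0_r. unfold th in HI.
        assert (1 * PI <= IZR k * PI) by (apply Rmult_le_compat_r; lra). lra. }
      set (rho := - Om / sin th) in *.
      assert (Hrho : 0 < rho).
      { unfold rho. replace (- Om / sin th) with (Om / - sin th) by (field; lra). apply Rdiv_lt_0_compat; lra. }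
      assert (Hw' : (u, v) = (rho / s * cos psi, rho / s * sin psi)).
      { f_equal; apply (Rmult_eq_reg_l s); try lra; field_simplify; lra. }
      set (R0 := rho / s) in *.
      assert (HR0 : 0 < R0) by (unfold R0; apply Rdiv_lt_0_compat; lra).
      assert (Ha : a = R0 * cos th).
      { apply (Rmult_eq_reg_l s); [|lra]. rewrite E1. unfold R0, rho. field. lra. }
      rewrite Hw'. split; [|apply Arg_polar; lra].
      unfold tau_plus, tau_pm. rewrite Arg_polar by lra. rewrite Cmod_polar by lra.
      assert (Hac : acos (a / R0) = - th + 2 * IZR k * PI).
      { replace (a / R0) with (cos th) by (rewrite Ha; field; lra).
        rewrite <- (cos_neg th), <- (cos_perZ (- th) k). apply acos_cos. unfold th; lra. }
      rewrite Hac.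
      assert (Hsq : sqrt (R0 ^ 2 - a ^ 2) = R0 * - sin th).
      { rewrite Ha. apply Rsqr_inj.
        - apply sqrt_pos.
        - nra.
        - rewrite Rsqr_sqrt.
          + pose proof (sin2_cos2 th) as H. unfold Rsqr in *. nra.
          + pose proof (sin2_cos2 th) as H. unfold Rsqr in *. nra. }
      rewrite Hsq. unfold R0, rho. unfold th. field.
      repeat split; try lra. fold th. lra.
    + rewrite (proj2 (Z.ltb_ge 0 k) ltac:(lia)) in HI |- *.
      rewrite (proj2 (Z.ltb_lt k 0) Hk) in HI.
      assert (HkR : IZR k <= -1) by (apply IZR_le; lia).
      assert (Hsn : 0 < sin th).
      { pose proof (sin_perZ (th - 2 * IZR k * PI) k) as P.
        replace (th - 2 * IZR k * PI + 2 * IZR k * PI) with th in P by ring.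
        rewrite P. apply sin_gt_0; unfold th; lra. }
      assert (HOm : Om < 0).
      { apply (Rmult_lt_reg_l tau); [lra|]. rewrite Rmult_0_r. unfold th in HI.
        assert (IZR k * PI <= -1 * PI) by (apply Rmult_le_compat_r; lra). lra. }
      set (rho := - Om / sin th) in *.
      assert (Hrho : 0 < rho).
      { unfold rho, Rdiv. apply Rmult_lt_0_compat; [lra|]. apply Rinv_0_lt_compat. lra. }
      assert (Hw' : (u, v) = (rho / s * cos psi, rho / s * sin psi)).
      { f_equal; apply (Rmult_eq_reg_l s); try lra; field_simplify; lra. }
      set (R0 := rho / s) in *.
      assert (HR0 : 0 < R0) by (unfold R0; apply Rdiv_lt_0_compat; lra).
      assert (Ha : a = R0 * cos th).
      { apply (Rmult_eq_reg_l s); [|lra]. rewrite E1. unfold R0, rho. field. lra. }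
      rewrite Hw'. split; [|apply Arg_polar; lra].
      unfold tau_minus, tau_pm. rewrite Arg_polar by lra. rewrite Cmod_polar by lra.
      assert (Hac : acos (a / R0) = th - 2 * IZR k * PI).
      { replace (a / R0) with (cos th) by (rewrite Ha; field; lra).
        replace (cos th) with (cos (th - 2 * IZR k * PI))
          by (rewrite <- (cos_perZ _ k); f_equal; ring).
        apply acos_cos. unfold th; lra. }
      rewrite Hac.
      assert (Hsq : sqrt (R0 ^ 2 - a ^ 2) = R0 * sin th).
      { rewrite Ha. apply Rsqr_inj.
        - apply sqrt_pos.
        - nra.
        - rewrite Rsqr_sqrt.
          + pose proof (sin2_cos2 th) as H. unfold Rsqr in *. nra.
          + pose proof (sin2_cos2 th) as H. unfold Rsqr in *. nra. }
      rewrite Hsq, opp_IZR. unfold R0, rho. unfold th. field.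
      repeat split; try lra. fold th. lra.
  - intros [Hsf HArg].
    pose proof (polar_of_Arg w Hw) as Hpol. rewrite HArg in Hpol.
    assert (Hr : 0 < Cmod w) by (apply Cmod_gt_0; exact Hw).
    set (r := Cmod w) in *.
    assert (Hx : -1 < a / r < 1).
    { apply Rabs_def2 in Hab. split.
      - apply (Rmult_lt_reg_r r); [lra|]. field_simplify; lra.
      - apply (Rmult_lt_reg_r r); [lra|]. field_simplify; lra. }
    set (x := a / r) in *.
    pose proof (acos_bound_lt x Hx) as Hal.
    set (al := acos x) in *.
    assert (Hca : cos al = x) by (apply cos_acos; lra).
    assert (Hsa : 0 < sin al) by (apply sin_gt_0; lra).
    assert (Hsq : sqrt (r ^ 2 - a ^ 2) = r * sin al).
    { apply Rsqr_inj.
      - apply sqrt_pos.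
      - nra.
      - rewrite Rsqr_sqrt.
        + pose proof (sin2_cos2 al) as H. unfold Rsqr in *.
          replace a with (r * x) by (unfold x; field; lra). rewrite <- Hca. nra.
        + replace a with (r * x) by (unfold x; field; lra). assert (x * x <= 1) by nra.
          assert (0 <= r * r * (1 - x * x)) by (apply Rmult_le_pos; nra). nra. }
    unfold tau_plus, tau_minus, tau_pm in Hsf. rewrite HArg in Hsf. fold r x al in Hsf.
    rewrite Hsq in Hsf.
    destruct Hkc as [Hk|Hk].
    + rewrite (proj2 (Z.ltb_lt 0 k) Hk) in Hsf.
      exists ((2 * IZR k * PI - al + psi) / tau). split.
      * unfold in_I. rewrite (proj2 (Z.ltb_lt 0 k) Hk).
        replace (tau * ((2 * IZR k * PI - al + psi) / tau)) with (2 * IZR k * PI - al + psi)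
          by (field; lra). lra.
      * assert (Hth : tau * ((2 * IZR k * PI - al + psi) / tau) - psi = - al + 2 * IZR k * PI)
          by (field; lra).
        unfold a_fun, rho_fun. rewrite Hth, cos_perZ, sin_perZ, cos_neg, sin_neg, Hca.
        rewrite Hpol. unfold RtoC, Cmult, expi. cbn [fst snd].
        replace a with (r * x) by (unfold x; field; lra).
        rewrite Hsf. f_equal; [|f_equal]; field; lra.
    + rewrite (proj2 (Z.ltb_ge 0 k) ltac:(lia)) in Hsf. rewrite opp_IZR in Hsf.
      exists ((2 * IZR k * PI + al + psi) / tau). split.
      * unfold in_I. rewrite (proj2 (Z.ltb_ge 0 k) ltac:(lia)), (proj2 (Z.ltb_lt k 0) Hk).
        replace (tau * ((2 * IZR k * PI + al + psi) / tau)) with (2 * IZR k * PI + al + psi)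
          by (field; lra). lra.
      * assert (Hth : tau * ((2 * IZR k * PI + al + psi) / tau) - psi = al + 2 * IZR k * PI)
          by (field; lra).
        unfold a_fun, rho_fun. rewrite Hth, cos_perZ, sin_perZ, Hca.
        rewrite Hpol. unfold RtoC, Cmult, expi. cbn [fst snd].
        replace a with (r * x) by (unfold x; field; lra).
        rewrite Hsf. f_equal; [|f_equal]; field; lra.
Qed.
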